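(* For each integer $n\ge0$ let $$f_n(x)=\frac{2}{\sqrt{\pi}}\sum_{k=0}^{n} c_{n,k}\,x^{k+1}\Big[p(k,0)+(-1)^k p(k,x)e^{-x^2}\Big]$$ and $\varepsilon_n(x)=\operatorname{erf}(x)-f_n(x)$. Then for every fixed $x>0$, $$\lim_{n\to\infty}\varepsilon_n'(x)=0,\qquad \lim_{n\to\infty}\varepsilon_n(x)=0,\qquad \lim_{n\to\infty}f_n(x)=\operatorname{erf}(x).$$ The convergence of $f_n$ to $\operatorname{erf}$ on $x>0$ is not uniform.
   Context: $\operatorname{erf}(x)=\frac{2}{\sqrt{\pi}}\int_0^x e^{-\lambda^2}\,d\lambda$. For integers $0\le k\le n$, $c_{n,k}=\frac{n!}{(n-k)!\,(k+1)!}\cdot\frac{(2n+1-k)!}{2\,(2n+1)!}$. The polynomials $p(k,x)$ are defined recursively by $p(0,x)=1$ and $p(k,x)=\frac{d}{dx}p(k-1,x)-2x\,p(k-1,x)$ for $k\ge1$. *)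

(* Defs.v *)
From Stdlib Require Import Reals Factorial.
From Coquelicot Require Import Coquelicot.
Open Scope R_scope.

Definition erf (x : R) : R :=
  2 / sqrt PI * RInt (fun l => exp (- l ^ 2)) 0 x.

Definition c (n k : nat) : R :=
  INR (Factorial.fact n) / (INR (Factorial.fact (n - k)) * INR (Factorial.fact (k + 1)))
  * (INR (Factorial.fact (2 * n + 1 - k)) / (2 * INR (Factorial.fact (2 * n + 1)))).

Fixpoint p (k : nat) : R -> R :=
  match k with
  | O => fun _ => 1
  | S k' => fun x => Derive (p k') x - 2 * x * p k' x
  end.

Definition f_n (n : nat) (x : R) : R :=
  2 / sqrt PI *
  sum_f_R0 (fun k => c n k * x ^ (k + 1) * (p k 0 + (-1) ^ k * p k x * exp (- x ^ 2))) n.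

Definition eps_n (n : nat) (x : R) : R := erf x - f_n n x.

(* Main.v *)
Require Import Defs.
From Stdlib Require Import Reals Lra Lia Factorial.
From Coquelicot Require Import Coquelicot.
Open Scope R_scope.


Definition dp (k : nat) (t : R) : R :=
  match k with O => 0 | S j => -2 * INR (S j) * p j t end.

Lemma deriv_comb (f q : R -> R) df dq a t : (forall u, is_derive f u (df u)) -> (forall u, is_derive q u (dq u)) ->
  is_derive (fun u => a * f u - 2*u*q u) t (a*df t - (2*q t + 2*t*dq t)).
Proof.
  intros Hf Hq. auto_derive.
  { repeat split; eexists; [apply Hf|apply Hq]. }
  replace (Derive (fun x : R => f x) t) with (df t) by (symmetry; apply is_derive_unique; apply Hf). replace (Derive (fun x : R => q x) t) with (dq t) by (symmetry; apply is_derive_unique; apply Hq). ring.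
Qed.

Lemma p_deriv_aux k : (forall t, is_derive (p k) t (dp k t)) /\ (forall t, is_derive (p (S k)) t (dp (S k) t)).
Proof.
  induction k as [|k [IH1 IH2]].
  - split; intros t; simpl.
    + auto_derive; auto.
    + apply is_derive_ext with (f := fun t => -2 * t).
      { intros u. rewrite Derive_const. simpl; ring. }
      auto_derive; auto. simpl; ring.
  - split; [exact IH2|]. intros t.
    assert (E : forall u, p (S (S k)) u = dp (S k) u - 2 * u * p (S k) u).
    { intros u. change (Derive (p (S k)) u - 2 * u * p (S k) u = dp (S k) u - 2 * u * p (S k) u). rewrite (is_derive_unique _ _ _ (IH2 u)). reflexivity. }
    apply is_derive_ext with (f := fun u => dp (S k) u - 2 * u * p (S k) u).
    { intros u; now rewrite E. }
    assert (D : forall (q : R -> R) dq, (forall u, is_derive q u (dq u)) ->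
      is_derive (fun u => -2 * INR (S k) * p k u - 2 * u * q u) t
        (-2 * INR (S k) * dp k t - (2 * q t + 2 * t * dq t))).
    { intros q dq Hq. apply deriv_comb; auto. }
    replace (dp (S (S k)) t) with (-2 * INR (S k) * dp k t - (2 * p (S k) t + 2 * t * dp (S k) t)).
    { apply (D _ _ IH2). }
    destruct k as [|k].
    + simpl. rewrite Derive_const. ring.
    + assert (E' : p (S (S k)) t = dp (S k) t - 2 * t * p (S k) t).
      { change (Derive (p (S k)) t - 2 * t * p (S k) t = dp (S k) t - 2 * t * p (S k) t).
        rewrite (is_derive_unique _ _ _ (IH1 t)). reflexivity. }
      change (dp (S (S (S k))) t) with (-2 * INR (S (S (S k))) * p (S (S k)) t).
      change (dp (S (S k)) t) with (-2 * INR (S (S k)) * p (S k) t).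
      change (dp (S k) t) with (-2 * INR (S k) * p k t) in *. rewrite E'. rewrite !S_INR. ring.
Qed.

Lemma p_deriv k t : is_derive (p k) t (dp k t).
Proof. apply p_deriv_aux. Qed.

Lemma p_rec k t : p (S (S k)) t = -2 * INR (S k) * p k t - 2 * t * p (S k) t.
Proof. change (Derive (p (S k)) t - 2 * t * p (S k) t = -2 * INR (S k) * p k t - 2 * t * p (S k) t). rewrite (is_derive_unique _ _ _ (p_deriv (S k) t)). reflexivity. Qed.

Lemma p_S k t : p (S k) t = dp k t - 2 * t * p k t.
Proof. change (Derive (p k) t - 2 * t * p k t = dp k t - 2 * t * p k t). rewrite (is_derive_unique _ _ _ (p_deriv k t)). reflexivity. Qed.

Lemma p1 t : p 1 t = -2 * t.
Proof. simpl. rewrite Derive_const. ring. Qed.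

Definition phi (k : nat) (t : R) : R := p k t * exp (- t ^ 2).

Lemma phi_deriv k t : is_derive (phi k) t (phi (S k) t).
Proof.
  unfold phi. auto_derive. { exists (dp k t); apply p_deriv. }
  replace (Derive (fun x : R => p k x) t) with (dp k t) by (symmetry; apply is_derive_unique; apply p_deriv).
  rewrite p_S. simpl pow. ring.
Qed.

Lemma phi_cont k t : continuous (phi k) t.
Proof. apply (ex_derive_continuous (K:=R_AbsRing) (V:=R_NormedModule) (phi k)). eexists; apply phi_deriv. Qed.


Lemma p_bound x t : 0 <= t <= x -> forall j,
  Rabs (p (2*j) t) <= (4*x+3)^(2*j) * INR (fact j) /\
  Rabs (p (S (2*j)) t) <= (4*x+3)^(S (2*j)) * INR (fact j).
Proof.
  intros Ht. set (A := 4*x+3).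
  assert (HA : 3 <= A) by (unfold A; lra).
  induction j as [|j [IH1 IH2]].
  - change (2*0)%nat with 0%nat. change (S 0) with 1%nat. simpl (p 0 t). rewrite p1. simpl fact. simpl pow. split; [rewrite Rabs_R1; simpl; lra|].
    rewrite Rabs_mult, Rabs_left by lra. rewrite (Rabs_right t) by lra. unfold A; simpl INR; lra.
  - set (F := A^(2*j) * INR (fact j)).
    assert (HF : 0 <= F) by (unfold F; apply Rmult_le_pos; [apply pow_le; lra|apply pos_INR]).
    assert (Hj : 0 <= INR j) by apply pos_INR.
    assert (E1 : A^(2 * S j) * INR (fact (S j)) = A*A*(INR j + 1) * F).
    { unfold F. replace (2 * S j)%nat with (S (S (2*j))) by lia. simpl pow.
      rewrite fact_simpl, mult_INR, S_INR. ring. }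
    assert (E2 : A^(S (2 * S j)) * INR (fact (S j)) = A*A*A*(INR j + 1) * F).
    { unfold F. replace (S (2 * S j))%nat with (S (S (S (2*j)))) by lia. simpl pow.
      rewrite fact_simpl, mult_INR, S_INR. ring. }
    change (A ^ S (2 * j) * INR (fact j)) with (A * A^(2*j) * INR (fact j)) in IH2.
    replace (A * A ^ (2 * j) * INR (fact j)) with (A * F) in IH2 by (unfold F; ring).
    fold F in IH1.
    assert (B1 : Rabs (p (2 * S j) t) <= A*A*(INR j + 1) * F).
    { replace (2 * S j)%nat with (S (S (2*j))) by lia. rewrite p_rec.
      eapply Rle_trans; [apply Rabs_triang|]. rewrite Rabs_Ropp, !Rabs_mult.
      rewrite (Rabs_left (-2)) by lra. rewrite (Rabs_right 2) by lra.
      rewrite (Rabs_right (INR _)) by (apply Rle_ge, pos_INR). rewrite (Rabs_right t) by lra.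
      rewrite S_INR, mult_INR. simpl (INR 2).
      assert (H1 : (2 * INR j + 1) * Rabs (p (2 * j) t) <= (2 * INR j + 1) * F) by (apply Rmult_le_compat_l; lra).
      assert (H2 : t * Rabs (p (S (2 * j)) t) <= x * (A * F)) by (apply Rmult_le_compat; try lra; apply Rabs_pos).
      assert (0 <= F * ((4*x+3)*(4*x+3)*(INR j + 1) - 2*(2*INR j+1) - 2*x*(4*x+3))) by (apply Rmult_le_pos; [lra|nra]).
      unfold A in *. nra. }
    split; [rewrite E1; exact B1|].
    rewrite E2.
    replace (S (2 * S j)) with (S (S (S (2*j)))) by lia. rewrite p_rec.
    replace (S (S (2*j))) with (2 * S j)%nat by lia.
    eapply Rle_trans; [apply Rabs_triang|]. rewrite Rabs_Ropp, !Rabs_mult.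
    rewrite (Rabs_left (-2)) by lra. rewrite (Rabs_right 2) by lra.
    rewrite (Rabs_right (INR _)) by (apply Rle_ge, pos_INR). rewrite (Rabs_right t) by lra.
    rewrite mult_INR, S_INR. simpl (INR 2).
    assert (H1 : (INR j + 1) * Rabs (p (S (2 * j)) t) <= (INR j + 1) * (A * F)) by (apply Rmult_le_compat_l; lra).
    assert (H2 : t * Rabs (p (2 * S j) t) <= x * (A * A * (INR j + 1) * F)) by (apply Rmult_le_compat; try lra; apply Rabs_pos).
    assert (0 <= A * F * (INR j + 1) * (A*A - 4 - 2*x*A)) by (apply Rmult_le_pos; [apply Rmult_le_pos; [apply Rmult_le_pos|]|]; unfold A in *; nra).
    rewrite (S_INR j). change (INR 1) with 1. clearbody F A. lra.
Qed.


Lemma is_derive_sum (F : nat -> R -> R) (G : nat -> R) N x :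
  (forall i, (i <= N)%nat -> is_derive (F i) x (G i)) ->
  is_derive (fun t => sum_f_R0 (fun i => F i t) N) x (sum_f_R0 G N).
Proof.
  induction N as [|N IH]; intros H.
  - simpl. apply H; lia.
  - simpl. apply (is_derive_plus (fun t => sum_f_R0 (fun i => F i t) N) (F (S N))).
    + apply IH; intros; apply H; lia.
    + apply H; lia.
Qed.

Lemma sum_zero (f : nat -> R) N : (forall i, (i <= N)%nat -> f i = 0) -> sum_f_R0 f N = 0.
Proof.
  induction N; intros H; simpl. apply H; lia. rewrite IHN by (intros; apply H; lia). rewrite H by lia. ring.
Qed.

Lemma sum_single (f : nat -> R) N j : (j <= N)%nat ->
  (forall i, (i <= N)%nat -> i <> j -> f i = 0) -> sum_f_R0 f N = f j.
Proof.
  induction N as [|N IH]; intros Hj H.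
  - simpl. assert (j = 0%nat) by lia. now subst.
  - simpl. destruct (Nat.eq_dec j (S N)) as [->|Hne].
    + rewrite sum_zero by (intros; apply H; lia). ring.
    + rewrite IH by (try lia; intros; apply H; lia). rewrite (H (S N)) by lia. ring.
Qed.

Lemma telescope (U : nat -> R) N : sum_f_R0 (fun k => U k - U (S k)) N = U 0%nat - U (S N).
Proof. induction N; simpl. ring. rewrite IHN. ring. Qed.

Fixpoint ff (e r : nat) : nat := match r with O => 1%nat | S r' => (ff e r' * (e - r'))%nat end.

Lemma ff_lt e r : (e < r)%nat -> ff e r = 0%nat.
Proof.
  induction r; intros H; [lia|]. simpl. destruct (Nat.eq_dec e r) as [->|Hn].
  - rewrite Nat.sub_diag. lia.
  - rewrite IHr by lia. lia.
Qed.

Lemma ff_fact e r : (r <= e)%nat -> (ff e r * fact (e - r) = fact e)%nat.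
Proof.
  induction r; intros H; simpl. rewrite Nat.sub_0_r; lia.
  rewrite <- IHr by lia.
  replace (e - r)%nat with (S (e - S r)) by lia. simpl fact. lia.
Qed.

Lemma ff_self e : ff e e = fact e.
Proof. pose proof (ff_fact e e (le_n _)). rewrite Nat.sub_diag in H. simpl in H. lia. Qed.

Definition Dp (m : nat) (c : R) (coef : nat -> R) (r : nat) (t : R) : R :=
  sum_f_R0 (fun i => coef i * INR (ff (m+i) r) * (t - c)^(m+i-r)) m.

Lemma term_deriv e r c t :
  is_derive (fun t => INR (ff e r) * (t - c)^(e-r)) t (INR (ff e (S r)) * (t - c)^(e - S r)).
Proof.
  auto_derive; auto. simpl ff. rewrite mult_INR.
  replace (e - S r)%nat with (pred (e - r)) by lia. unfold Rminus. ring.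
Qed.

Lemma Dp_deriv m c coef r t : is_derive (Dp m c coef r) t (Dp m c coef (S r) t).
Proof.
  unfold Dp. apply (is_derive_sum (fun i t => coef i * INR (ff (m + i) r) * (t - c) ^ (m + i - r))
     (fun i => coef i * INR (ff (m + i) (S r)) * (t - c) ^ (m + i - S r))).
  intros i _.
  eapply is_derive_ext. { intros u. symmetry. apply Rmult_assoc. }
  replace (coef i * INR (ff (m + i) (S r)) * (t - c) ^ (m + i - S r)) with
    (coef i * (INR (ff (m + i) (S r)) * (t - c) ^ (m + i - S r))) by ring.
  apply (is_derive_scal (fun t => INR (ff (m + i) r) * (t - c) ^ (m + i - r))).
  apply term_deriv.
Qed.

Lemma Dp_at_c_in m c coef r : (m <= r <= m + m)%nat -> Dp m c coef r c = coef (r - m)%nat * INR (fact r).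
Proof.
  intros Hr. unfold Dp. rewrite (sum_single _ m (r - m)) by (first [lia|
    intros i Hi Hne; destruct (Nat.lt_ge_cases (m+i) r);
    [rewrite ff_lt by lia; simpl; ring
    |rewrite Rminus_diag, pow_i by lia; ring]]).
  replace (m + (r - m))%nat with r by lia. rewrite Nat.sub_diag, ff_self. simpl. ring.
Qed.

Lemma Dp_at_c_out m c coef r : (r < m)%nat -> Dp m c coef r c = 0.
Proof.
  intros Hr. unfold Dp. apply sum_zero. intros i Hi.
  rewrite Rminus_diag, pow_i by lia. ring.
Qed.

Lemma Dp_top m c coef t : Dp m c coef (m + m) t = coef m * INR (fact (m + m)).
Proof.
  unfold Dp. rewrite (sum_single _ m m) by (first [lia|
    intros i Hi Hne; rewrite ff_lt by lia; simpl; ring]).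
  rewrite Nat.sub_diag, ff_self. simpl. ring.
Qed.

Definition aC (m : nat) (y : R) (i : nat) : R := Binomial.C m i * (- y)^(m - i).
Definition bC (m : nat) (y : R) (i : nat) : R := Binomial.C m i * y^(m - i).

Lemma Dp_a0 m y t : Dp m 0 (aC m y) 0 t = t^m * (t - y)^m.
Proof.
  unfold Dp, aC. replace (t - y) with (t + - y) by ring. rewrite binomial, scal_sum.
  apply sum_eq. intros i Hi. simpl ff. rewrite Nat.sub_0_r, pow_add. simpl INR. ring_simplify.
  replace (t - 0) with t by ring. ring.
Qed.

Lemma Dp_b0 m y t : Dp m y (bC m y) 0 t = t^m * (t - y)^m.
Proof.
  unfold Dp, bC. replace t with ((t - y) + y) at 1 by ring. rewrite binomial, Rmult_comm, scal_sum.
  apply sum_eq. intros i Hi. simpl ff. rewrite Nat.sub_0_r, pow_add. simpl INR. ring.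
Qed.

Lemma Dp_eq m y r t : Dp m 0 (aC m y) r t = Dp m y (bC m y) r t.
Proof.
  revert t. induction r; intros t.
  - rewrite Dp_a0, Dp_b0. reflexivity.
  - rewrite <- (is_derive_unique _ _ _ (Dp_deriv m 0 (aC m y) r t)).
    rewrite <- (is_derive_unique _ _ _ (Dp_deriv m y (bC m y) r t)).
    apply Derive_ext. exact IHr.
Qed.


Lemma deriv_prod3 (f g : R -> R) df dg s t :
  is_derive f t df -> is_derive g t dg ->
  is_derive (fun u => s * f u * g u) t (s * (df * g t + f t * dg)).
Proof.
  intros Hf Hg. auto_derive. { split; [exists df; exact Hf|split; [exists dg; exact Hg|auto]]. }
  replace (Derive (fun x : R => f x) t) with df by (symmetry; apply is_derive_unique; exact Hf).
  replace (Derive (fun x : R => g x) t) with dg by (symmetry; apply is_derive_unique; exact Hg).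
  ring.
Qed.

Lemma coef_eq n k : (k <= n)%nat ->
  Binomial.C (S n) (n - k) * INR (fact (2*n+1-k)) = INR (fact (2*n+2)) * c n k.
Proof.
  intros Hk. unfold Binomial.C, c.
  replace (S n - (n - k))%nat with (k + 1)%nat by lia.
  replace (2*n+2)%nat with (S (2*n+1)) by lia.
  rewrite (fact_simpl (2*n+1)), (fact_simpl n), !mult_INR.
  rewrite !S_INR, plus_INR, mult_INR. simpl (INR 2). simpl (INR 1).
  field. repeat split; try apply INR_fact_neq_0; pose proof (pos_INR n); lra.
Qed.

Lemma sign_cases k : (-1)^k = 1 \/ (-1)^k = -1.
Proof. induction k; simpl; [now left|]. destruct IHk as [->| ->]; [right|left]; ring. Qed.

Lemma sum_tail_zero (f : nat -> R) N M : (N <= M)%nat ->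
  (forall k, (N < k <= M)%nat -> f k = 0) -> sum_f_R0 f M = sum_f_R0 f N.
Proof.
  induction M; intros HNM H.
  - assert (N = 0%nat) by lia. now subst.
  - destruct (Nat.eq_dec N (S M)) as [->|Hne]; [reflexivity|].
    simpl. rewrite IHM by (try lia; intros; apply H; lia). rewrite (H (S M)) by lia. ring.
Qed.

Definition Q n y := sum_f_R0 (fun k => c n k * y ^ (k + 1) * (p k 0 + (-1) ^ k * p k y * exp (- y ^ 2))) n.

Section Main.
Variable n : nat.
Variable y : R.
Let m := S n.
Let Dr (r : nat) (t : R) := Dp m 0 (aC m y) r t.
Let F (k : nat) (t : R) := (-1)^(S k) * Dr (2*n+1-k) t * phi k t.
Let U (k : nat) (t : R) := (-1)^(S k) * Dr (2*n+2-k) t * phi k t.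

Lemma F_deriv k t : (k <= 2*n+1)%nat -> is_derive (F k) t (U k t - U (S k) t).
Proof.
  intros Hk.
  pose proof (deriv_prod3 (Dr (2*n+1-k)) (phi k) _ _ ((-1)^(S k)) t (Dp_deriv _ _ _ _ t) (phi_deriv k t)) as D.
  replace (U k t - U (S k) t) with ((-1) ^ S k * (Dr (S (2 * n + 1 - k)) t * phi k t + Dr (2 * n + 1 - k) t * phi (S k) t)).
  { exact D. }
  unfold U. replace (S (2 * n + 1 - k)) with (2*n+2-k)%nat by lia.
  replace (2 * n + 2 - S k)%nat with (2*n+1-k)%nat by lia. simpl pow. ring.
Qed.

Definition Hf (t : R) := sum_f_R0 (fun k => F k t) (2*n+1).

Lemma H_deriv t : is_derive Hf t (U 0 t - U (S (2*n+1)) t).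
Proof.
  unfold Hf. rewrite <- (telescope (fun k => U k t)).
  apply (is_derive_sum F (fun k => U k t - U (S k) t)). intros; apply F_deriv; lia.
Qed.

Lemma U_ex_derive k t : ex_derive (U k) t.
Proof. eexists. unfold U. apply deriv_prod3; [apply Dp_deriv|apply phi_deriv]. Qed.

Lemma U0 t : U 0 t = - INR (fact (2*n+2)) * phi 0 t.
Proof.
  unfold U, Dr. replace (2*n+2-0)%nat with (m+m)%nat by (unfold m; lia).
  rewrite Dp_top. unfold aC. rewrite C_n_n, Nat.sub_diag. replace (m+m)%nat with (2*n+2)%nat by (unfold m; lia).
  simpl. ring.
Qed.

Lemma Utop t : U (S (2*n+1)) t = - (t^m * (t-y)^m) * phi (2*n+2) t.
Proof.
  unfold U, Dr. replace (2*n+2 - S (2*n+1))%nat with 0%nat by lia. rewrite Dp_a0.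
  replace (S (2*n+1)) with (2*n+2)%nat by lia. replace (S (2*n+2)) with (2*(n+1)+1)%nat by lia.
  rewrite pow_add, pow_mult. replace ((-1)^2) with 1 by ring. rewrite pow1. ring.
Qed.

Lemma H_int : is_RInt (fun t => U 0 t - U (S (2*n+1)) t) 0 y (Hf y - Hf 0).
Proof.
  apply (is_RInt_derive Hf (fun t => U 0 t - U (S (2*n+1)) t)).
  - intros; apply H_deriv.
  - intros x _. apply (ex_derive_continuous (K:=R_AbsRing) (V:=R_NormedModule)).
    apply (ex_derive_minus (K:=R_AbsRing) (V:=R_NormedModule)); apply U_ex_derive.
Qed.

Lemma phi0 k : phi k 0 = p k 0.
Proof. unfold phi. replace (- 0^2) with 0 by ring. rewrite exp_0. ring. Qed.

Lemma F_diff k : (k <= n)%nat ->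
  F k y - F k 0 = - INR (fact (2*n+2)) * (c n k * y ^ (k + 1) * (p k 0 + (-1) ^ k * p k y * exp (- y ^ 2))).
Proof.
  intros Hk. unfold F, Dr. rewrite (Dp_eq m y _ y).
  rewrite Dp_at_c_in by (unfold m; lia). rewrite Dp_at_c_in by (unfold m; lia).
  unfold aC, bC. replace (2 * n + 1 - k - m)%nat with (n - k)%nat by (unfold m; lia).
  replace (m - (n - k))%nat with (k + 1)%nat by (unfold m; lia). unfold m.
  assert (Ec : c n k = Binomial.C (S n) (n - k) * INR (fact (2*n+1-k)) / INR (fact (2*n+2))).
  { rewrite coef_eq by lia. field. apply INR_fact_neq_0. }
  rewrite Ec. rewrite phi0. unfold phi.
  replace (-y) with (-1 * y) by ring. rewrite Rpow_mult_distr.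
  replace (k+1)%nat with (S k) by lia. simpl pow.
  destruct (sign_cases k) as [-> | ->]; field; apply INR_fact_neq_0.
Qed.

Lemma F_zero k : (n < k <= 2*n+1)%nat -> F k y - F k 0 = 0.
Proof.
  intros Hk. unfold F, Dr. rewrite (Dp_eq m y _ y).
  rewrite Dp_at_c_out by (unfold m; lia). rewrite Dp_at_c_out by (unfold m; lia). ring.
Qed.

Lemma H_diff : Hf y - Hf 0 = - INR (fact (2*n+2)) * Q n y.
Proof.
  unfold Hf. rewrite <- minus_sum.
  rewrite (sum_tail_zero _ n) by (try lia; intros; apply F_zero; lia).
  unfold Q. rewrite scal_sum. apply sum_eq. intros k Hk. rewrite F_diff by lia. ring.
Qed.

End Main.

Lemma is_RInt_sum (G : nat -> R -> R) (v : nat -> R) N a b :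
  (forall i, (i <= N)%nat -> is_RInt (G i) a b (v i)) ->
  is_RInt (fun t => sum_f_R0 (fun i => G i t) N) a b (sum_f_R0 v N).
Proof.
  induction N; intros H; simpl. apply H; lia.
  apply (is_RInt_plus (fun t => sum_f_R0 (fun i => G i t) N) (G (S N))).
  apply IHN; intros; apply H; lia. apply H; lia.
Qed.

Lemma ex_RInt_cont (f : R -> R) a b : (forall t, ex_derive f t) -> ex_RInt f a b.
Proof.
  intros H. apply (ex_RInt_continuous (V:=R_CompleteNormedModule)). intros z _.
  apply (ex_derive_continuous (K:=R_AbsRing) (V:=R_NormedModule)). apply H.
Qed.

Definition Iint n i y := RInt (fun t => t^(S n + i) * phi (2*n+2) t) 0 y.
Definition W n y := sum_f_R0 (fun i => aC (S n) y i * Iint n i y) (S n).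

Lemma ex_deriv_powphi j k t : ex_derive (fun t => t^j * phi k t) t.
Proof. apply ex_derive_mult. auto_derive; auto. eexists; apply phi_deriv. Qed.

Lemma is_RInt_Rmult (f : R -> R) a b k v : is_RInt f a b v -> is_RInt (fun t => k * f t) a b (k * v).
Proof. intros H. apply (is_RInt_scal f a b k v H). Qed.

Lemma kernel_expand n y t : t^(S n) * (t-y)^(S n) * phi (2*n+2) t =
  sum_f_R0 (fun i => aC (S n) y i * (t^(S n + i) * phi (2*n+2) t)) (S n).
Proof.
  rewrite <- (Dp_a0 (S n) y t). unfold Dp. rewrite Rmult_comm, scal_sum. apply sum_eq.
  intros i _. simpl ff. rewrite Nat.sub_0_r, Rminus_0_r. simpl INR. ring.
Qed.

Lemma main_identity n y : INR (fact (2*n+2)) * (RInt (phi 0) 0 y - Q n y) = W n y.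
Proof.
  pose proof (H_int n y) as H1. rewrite H_diff in H1.
  set (K := INR (fact (2*n+2))).
  assert (H2 : is_RInt (fun t => t^(S n) * (t-y)^(S n) * phi (2*n+2) t) 0 y (W n y)).
  { eapply is_RInt_ext. { intros t _. symmetry. apply kernel_expand. }
    unfold W. apply (is_RInt_sum (fun i t => aC (S n) y i * (t ^ (S n + i) * phi (2*n+2) t))).
    intros i _. apply is_RInt_Rmult. unfold Iint. apply (RInt_correct (V:=R_CompleteNormedModule)). apply ex_RInt_cont. intros; apply ex_deriv_powphi. }
  assert (H3 : is_RInt (fun t => K * phi 0 t) 0 y (K * RInt (phi 0) 0 y)).
  { apply is_RInt_Rmult. apply (RInt_correct (V:=R_CompleteNormedModule)). apply ex_RInt_cont. intros; eexists; apply phi_deriv. }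
  pose proof (is_RInt_minus _ _ _ _ _ _ H2 H3) as H4.
  assert (H5 : is_RInt (fun t => t^(S n) * (t-y)^(S n) * phi (2*n+2) t - K * phi 0 t) 0 y (- K * Q n y)).
  { eapply is_RInt_ext; [|exact H1]. intros t _.
    pose proof (U0 n y t) as E0. pose proof (Utop n y t) as E1. cbv beta in E0, E1 |- *.
    replace (S (2 * n + 1)) with (2*n+2)%nat in * by lia. fold K in E0. lra. }
  pose proof (is_RInt_unique _ _ _ _ H4) as E4. pose proof (is_RInt_unique _ _ _ _ H5) as E5.
  change (RInt (fun t => t^(S n) * (t-y)^(S n) * phi (2*n+2) t - K * phi 0 t) 0 y = W n y - K * RInt (phi 0) 0 y) in E4.
  rewrite E4 in E5. lra.
Qed.


Lemma deriv_prod2 (f g : R -> R) df dg t :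
  is_derive f t df -> is_derive g t dg ->
  is_derive (fun u => f u * g u) t (df * g t + f t * dg).
Proof.
  intros Hf Hg. pose proof (deriv_prod3 f g df dg 1 t Hf Hg) as D.
  eapply is_derive_ext; [|replace (df * g t + f t * dg) with (1 * (df * g t + f t * dg)) by ring; exact D].
  intros; simpl; ring.
Qed.

Definition da (m : nat) (y : R) (i : nat) : R := Binomial.C m i * (INR (m - i) * (-1) * (- y)^(pred (m - i))).

Lemma aC_deriv m i y : is_derive (fun y => aC m y i) y (da m y i).
Proof. unfold aC, da. auto_derive; auto. ring. Qed.

Lemma Iint_deriv n i x : is_derive (Iint n i) x (x^(S n + i) * phi (2*n+2) x).
Proof.
  apply (is_derive_RInt (fun t => t^(S n + i) * phi (2*n+2) t) (Iint n i) 0 x).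
  - apply filter_forall. intros b. unfold Iint. apply (RInt_correct (V:=R_CompleteNormedModule)).
    apply ex_RInt_cont. intros; apply ex_deriv_powphi.
  - apply (ex_derive_continuous (K:=R_AbsRing) (V:=R_NormedModule)). apply ex_deriv_powphi.
Qed.

Definition Wd n x := sum_f_R0 (fun i => da (S n) x i * Iint n i x) (S n).

Lemma W_deriv n x : is_derive (W n) x (Wd n x).
Proof.
  unfold W.
  assert (D : is_derive (fun y => sum_f_R0 (fun i => aC (S n) y i * Iint n i y) (S n)) x
     (sum_f_R0 (fun i => da (S n) x i * Iint n i x + aC (S n) x i * (x^(S n + i) * phi (2*n+2) x)) (S n))).
  { apply (is_derive_sum (fun i y => aC (S n) y i * Iint n i y)). intros i _.
    apply (deriv_prod2 (fun y => aC (S n) y i) (Iint n i)); [apply aC_deriv|apply Iint_deriv]. }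
  rewrite plus_sum, <- kernel_expand in D. unfold Wd.
  replace (x - x) with 0 in D by ring. rewrite pow_i, Rmult_0_r, Rmult_0_l, Rplus_0_r in D by lia.
  exact D.
Qed.

Lemma eps_W n y : eps_n n y = 2 / sqrt PI / INR (fact (2*n+2)) * W n y.
Proof.
  rewrite <- main_identity. unfold eps_n, erf, f_n.
  replace (RInt (fun l => exp (- l ^ 2)) 0 y) with (RInt (phi 0) 0 y).
  2:{ apply RInt_ext. intros t _. unfold phi. simpl. ring. }
  unfold Q. pose proof (INR_fact_neq_0 (2*n+2)). assert (sqrt PI <> 0) by (apply Rgt_not_eq, sqrt_lt_R0, PI_RGT_0). field; auto.
Qed.

Lemma eps_deriv n x : Derive (eps_n n) x = 2 / sqrt PI / INR (fact (2*n+2)) * Wd n x.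
Proof.
  apply is_derive_unique. eapply is_derive_ext. { intros t. symmetry. apply eps_W. }
  apply (is_derive_scal (W n)). apply W_deriv.
Qed.


Lemma fact_mul_le a b : (fact a * fact b <= fact (a + b))%nat.
Proof.
  induction b. simpl. rewrite Nat.add_0_r. lia.
  replace (a + S b)%nat with (S (a + b)) by lia. rewrite !fact_simpl.
  nia.
Qed.

Lemma INR_le_pow2 m : INR m <= 2^m.
Proof. induction m. simpl; lra. rewrite S_INR. simpl. assert (1 <= 2^m) by (apply pow_R1_Rle; lra). lra. Qed.

Lemma sumC m : sum_f_R0 (fun i => Binomial.C m i) m = 2^m.
Proof.
  replace 2 with (1+1) by ring. rewrite binomial. apply sum_eq. intros. rewrite !pow1. ring.
Qed.

Lemma C_pos m i : 0 <= Binomial.C m i.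
Proof. unfold Binomial.C. apply Rmult_le_pos. apply pos_INR. apply Rlt_le, Rinv_0_lt_compat, Rmult_lt_0_compat; apply INR_fact_lt_0. Qed.

Lemma sum_bound_C m (f : nat -> R) Z : (forall i, (i <= m)%nat -> Rabs (f i) <= Binomial.C m i * Z) ->
  Rabs (sum_f_R0 f m) <= 2^m * Z.
Proof.
  intros H. eapply Rle_trans; [apply sum_f_R0_triangle|].
  eapply Rle_trans; [apply sum_Rle; exact H|].
  rewrite <- scal_sum, sumC. lra.
Qed.

Lemma exp_neg_le1 t : exp (- t^2) <= 1.
Proof.
  rewrite <- exp_0. assert (- t^2 <= 0) by (pose proof (pow2_ge_0 t); lra).
  destruct (Rle_lt_or_eq_dec _ _ H) as [Hl| ->]; [apply Rlt_le, exp_increasing, Hl|lra].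
Qed.

Section B.
Variable x : R.
Hypothesis Hx : 0 < x.
Let X := x + 1.
Let A := 4 * x + 3.

Lemma phi_bound n t : 0 <= t <= x -> Rabs (phi (2*n+2) t) <= A^(2*n+2) * INR (fact (S n)).
Proof.
  intros Ht. destruct (p_bound x t Ht (S n)) as [H _].
  replace (2 * S n)%nat with (2*n+2)%nat in H by lia.
  unfold phi. rewrite Rabs_mult. rewrite (Rabs_pos_eq (exp _)) by (apply Rlt_le, exp_pos).
  fold A in H. pose proof (exp_neg_le1 t). pose proof (Rabs_pos (p (2*n+2) t)).
  apply Rle_trans with (Rabs (p (2 * n + 2) t) * 1); [apply Rmult_le_compat_l; lra|lra].
Qed.

Let Mb n := A^(2*n+2) * INR (fact (S n)).

Lemma Mb_pos n : 0 <= Mb n.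
Proof. unfold Mb. apply Rmult_le_pos; [apply pow_le; unfold A; lra|apply pos_INR]. Qed.

Lemma X_ge1 : 1 <= X.
Proof. unfold X; lra. Qed.

Lemma powx_le k j : (k <= j)%nat -> x^k <= X^j.
Proof.
  intros H. apply Rle_trans with (X^k). apply pow_incr. unfold X; lra.
  apply Rle_pow; [apply X_ge1|exact H].
Qed.

Lemma Iint_bound n i : (i <= S n)%nat -> Rabs (Iint n i x) <= X^(2*n+3) * Mb n.
Proof.
  intros Hi. unfold Iint.
  eapply Rle_trans.
  { apply (abs_RInt_le_const _ 0 x (x^(S n + i) * Mb n)). lra.
    apply ex_RInt_cont; intros; apply ex_deriv_powphi.
    intros t Ht. rewrite Rabs_mult. apply Rmult_le_compat; try apply Rabs_pos.
    - rewrite <- RPow_abs. apply pow_incr. split; [apply Rabs_pos|]. rewrite Rabs_pos_eq; lra.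
    - apply phi_bound; lra. }
  replace (X^(2*n+3)) with (X * X^(2*n+2)) by (replace (2*n+3)%nat with (S (2*n+2)) by lia; reflexivity).
  pose proof (Mb_pos n).
  assert (x^(S n + i) <= X^(2*n+2)) by (apply powx_le; lia).
  assert (0 <= x^(S n + i)) by (apply pow_le; lra).
  assert (x <= X) by (unfold X; lra).
  rewrite Rminus_0_r. apply Rle_trans with (X * (X^(2*n+2) * Mb n)).
  - apply Rmult_le_compat; try lra. apply Rmult_le_pos; [lra|apply Mb_pos]. apply Rmult_le_compat_r; [apply Mb_pos|lra].
  - right; ring.
Qed.

Lemma W_bound n : Rabs (W n x) <= 2^(S n) * (X^(S n) * (X^(2*n+3) * Mb n)).
Proof.
  unfold W. apply sum_bound_C. intros i Hi. unfold aC.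
  rewrite !Rabs_mult, (Rabs_pos_eq (Binomial.C _ _)) by apply C_pos.
  rewrite Rmult_assoc. apply Rmult_le_compat_l; [apply C_pos|].
  apply Rmult_le_compat; try apply Rabs_pos.
  - rewrite <- RPow_abs, Rabs_Ropp, Rabs_pos_eq by lra. apply powx_le; lia.
  - apply Iint_bound; lia.
Qed.

Lemma Wd_bound n : Rabs (Wd n x) <= 2^(S n) * ((INR (S n) * X^(S n)) * (X^(2*n+3) * Mb n)).
Proof.
  unfold Wd. apply sum_bound_C. intros i Hi. unfold da.
  assert (E : Rabs (INR (S n - i) * -1 * (-x)^(pred (S n - i))) = INR (S n - i) * x^(pred (S n - i))).
  { rewrite !Rabs_mult, <- RPow_abs, Rabs_Ropp, (Rabs_pos_eq x), (Rabs_pos_eq (INR _)). replace (Rabs (-1)) with 1 by (rewrite Rabs_left; lra).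
    ring. apply pos_INR. lra. }
  rewrite Rabs_mult, (Rabs_mult (Binomial.C _ _)), E, (Rabs_pos_eq (Binomial.C _ _)) by apply C_pos.
  rewrite Rmult_assoc. apply Rmult_le_compat_l; [apply C_pos|].
  apply Rmult_le_compat; try apply Rabs_pos.
  - apply Rmult_le_pos; [apply pos_INR|apply pow_le; lra].
  - apply Rmult_le_compat; try apply pos_INR; try (apply pow_le; lra).
    apply le_INR; lia. apply powx_le; lia.
  - apply Iint_bound; lia.
Qed.
End B.

Lemma lim_bound (v : nat -> R) C L : (forall n, Rabs (v n) <= C * (L^(S n) / INR (fact (S n)))) -> is_lim_seq v 0.
Proof.
  intros H.
  assert (Hw : is_lim_seq (fun n => C * (L^(S n) / INR (fact (S n)))) 0).
  { replace (Finite 0) with (Rbar_mult C 0) by (simpl; f_equal; ring).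
    apply is_lim_seq_scal_l.
    apply (is_lim_seq_incr_1 (fun n => L^n / INR (fact n))).
    apply is_lim_seq_Reals. apply cv_speed_pow_fact. }
  apply is_lim_seq_le_le with (u := fun n => - (C * (L^(S n) / INR (fact (S n))))) (w := fun n => C * (L^(S n) / INR (fact (S n)))).
  - intros n. specialize (H n). apply Rabs_le_between in H. lra.
  - pose proof (proj1 (is_lim_seq_opp _ _) Hw) as H'. simpl in H'. rewrite Ropp_0 in H'. exact H'.
  - exact Hw.
Qed.

Section C.
Variable x : R.
Hypothesis Hx : 0 < x.
Let X := x + 1.
Let A := 4 * x + 3.
Let L := 4 * X^3 * A^2.

Lemma Z_bound n : 2^(S n) * ((INR (S n) * X^(S n)) * (X^(2*n+3) * (A^(2*n+2) * INR (fact (S n))))) / INR (fact (2*n+2))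
   <= X * (L^(S n) / INR (fact (S n))).
Proof.
  set (m := S n).
  assert (HX : 1 <= X) by (unfold X; lra).
  assert (HA : 0 <= A) by (unfold A; lra).
  assert (Hf : INR (fact m) * INR (fact m) <= INR (fact (2*n+2))).
  { rewrite <- mult_INR. apply le_INR. replace (2*n+2)%nat with (m+m)%nat by (unfold m; lia). apply fact_mul_le. }
  assert (Hfp : 0 < INR (fact m)) by apply INR_fact_lt_0.
  assert (E1 : X^m * X^(2*n+3) = X * (X^3)^m).
  { rewrite <- pow_add, <- pow_mult. replace (m + (2*n+3))%nat with (S (3*m)) by (unfold m; lia). simpl. ring. }
  assert (E2 : A^(2*n+2) = (A^2)^m). { rewrite <- pow_mult. f_equal. unfold m; lia. }
  assert (E3 : L^m = 2^m * 2^m * ((X^3)^m * (A^2)^m)).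
  { unfold L. rewrite <- Rpow_mult_distr, <- !Rpow_mult_distr. f_equal. ring. }
  assert (Hm : INR m <= 2^m) by apply INR_le_pow2.
  set (P := (X^3)^m * (A^2)^m).
  assert (HP : 0 <= P) by (unfold P; apply Rmult_le_pos; apply pow_le; nra).
  assert (H2 : 0 < 2^m) by (apply pow_lt; lra).
  replace (2 ^ m * (INR m * X ^ m * (X ^ (2 * n + 3) * (A ^ (2 * n + 2) * INR (fact m)))))
    with (2^m * INR m * (X^m * X^(2*n+3)) * A^(2*n+2) * INR (fact m)) by ring.
  rewrite E1, E2.
  replace (2 ^ m * INR m * (X * (X ^ 3) ^ m) * (A ^ 2) ^ m * INR (fact m)) with (2^m * INR m * X * P * INR (fact m)) by (unfold P; ring).
  rewrite E3.
  assert (Hm0 : 0 <= INR m) by apply pos_INR.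
  assert (N1 : 0 <= 2^m * INR m) by nra.
  assert (N2 : 0 <= 2^m * INR m * X) by nra.
  assert (N3 : 0 <= 2^m * INR m * X * P) by nra.
  assert (N4 : 0 <= 2^m * INR m * X * P * INR (fact m)) by nra.
  apply Rle_trans with (2 ^ m * INR m * X * P * INR (fact m) / (INR (fact m) * INR (fact m))).
  - unfold Rdiv. apply Rmult_le_compat_l; [exact N4|].
    apply Rinv_le_contravar; [nra|exact Hf].
  - replace (2 ^ m * INR m * X * P * INR (fact m) / (INR (fact m) * INR (fact m))) with
      (2 ^ m * INR m * X * P / INR (fact m)) by (field; lra).
    unfold Rdiv. rewrite <- !Rmult_assoc. apply Rmult_le_compat_r.
    + apply Rlt_le, Rinv_0_lt_compat, Hfp.
    + assert (0 <= X * P) by nra. assert (0 <= 2^m * (X * P) * (2^m - INR m)) by (apply Rmult_le_pos; nra). replace (X * 2 ^ m * 2 ^ m * (X ^ 3) ^ m * (A ^ 2) ^ m) with (X * 2 ^ m * 2 ^ m * P) by (unfold P; ring). nra.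
Qed.

Let c0 := 2 / sqrt PI.
Lemma c0_pos : 0 < c0.
Proof. unfold c0. apply Rdiv_lt_0_compat; [lra|apply sqrt_lt_R0, PI_RGT_0]. Qed.

Lemma scaled_bound n v : Rabs v <= 2^(S n) * ((INR (S n) * X^(S n)) * (X^(2*n+3) * (A^(2*n+2) * INR (fact (S n))))) ->
  Rabs (c0 / INR (fact (2*n+2)) * v) <= c0 * X * (L^(S n) / INR (fact (S n))).
Proof.
  intros Hv. pose proof c0_pos. pose proof (INR_fact_lt_0 (2*n+2)).
  rewrite Rabs_mult, Rabs_pos_eq by (apply Rlt_le, Rdiv_lt_0_compat; lra).
  replace (c0 / INR (fact (2 * n + 2)) * Rabs v) with (c0 * (Rabs v / INR (fact (2 * n + 2)))) by (field; lra).
  rewrite Rmult_assoc. apply Rmult_le_compat_l; [lra|].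
  eapply Rle_trans; [|apply Z_bound].
  unfold Rdiv. apply Rmult_le_compat_r; [apply Rlt_le, Rinv_0_lt_compat; lra|exact Hv].
Qed.

Lemma deriv_lim : is_lim_seq (fun n => Derive (eps_n n) x) 0.
Proof.
  apply (lim_bound _ (c0 * X) L). intros n. rewrite eps_deriv. apply scaled_bound.
  apply (Wd_bound x Hx n).
Qed.

Lemma eps_lim : is_lim_seq (fun n => eps_n n x) 0.
Proof.
  apply (lim_bound _ (c0 * X) L). intros n. rewrite eps_W. apply scaled_bound.
  eapply Rle_trans; [apply (W_bound x Hx n)|].
  apply Rmult_le_compat_l; [apply pow_le; lra|].
  apply Rmult_le_compat_r.
  - apply Rmult_le_pos; [apply pow_le; unfold X; lra|]. apply Rmult_le_pos; [apply pow_le; unfold A; lra|apply pos_INR].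
  - assert (0 <= X^(S n)) by (apply pow_le; unfold X; lra).
    assert (1 <= INR (S n)) by (rewrite S_INR; pose proof (pos_INR n); lra). change ((x+1)^(S n)) with (X^(S n)). nra.
Qed.
End C.


Lemma p_bound2 x t k : 0 <= t <= x -> Rabs (p k t) <= (4*x+3)^k * INR (fact k).
Proof.
  intros Ht. assert (0 <= 4*x+3) by lra.
  destruct (Nat.Even_or_Odd k) as [[j ->]|[j ->]].
  - destruct (p_bound x t Ht j) as [H1 _]. eapply Rle_trans; [exact H1|].
    apply Rmult_le_compat_l; [apply pow_le; lra|]. apply le_INR, fact_le; lia.
  - destruct (p_bound x t Ht j) as [_ H1]. replace (2*j+1)%nat with (S (2*j)) by lia.
    eapply Rle_trans; [exact H1|].
    apply Rmult_le_compat_l; [apply pow_le; lra|]. apply le_INR, fact_le; lia.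
Qed.

Lemma exp_mul j z : exp (INR j * z) = exp z ^ j.
Proof.
  induction j. simpl. rewrite Rmult_0_l, exp_0. reflexivity.
  rewrite S_INR. replace ((INR j + 1) * z) with (INR j * z + z) by ring. rewrite exp_plus, IHj. simpl. ring.
Qed.

Lemma exp_ge_id z : z <= exp z.
Proof.
  destruct (Req_dec z 0) as [->|Hz]. rewrite exp_0; lra.
  pose proof (exp_ineq1 z Hz). lra.
Qed.

Lemma pow_exp_bound y j : 0 <= y -> (0 < j)%nat -> y^j * exp (- y) <= INR j ^ j.
Proof.
  intros Hy Hj. assert (Hjp : 0 < INR j) by (apply lt_0_INR; lia).
  assert (E : exp y = exp (y / INR j) ^ j).
  { rewrite <- exp_mul. f_equal. field. lra. }
  assert (H1 : (y / INR j)^j <= exp (y / INR j)^j).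
  { apply pow_incr. split. apply Rmult_le_pos; [lra|apply Rlt_le, Rinv_0_lt_compat; lra]. apply exp_ge_id. }
  rewrite <- E in H1. unfold Rdiv in H1. rewrite Rpow_mult_distr, pow_inv in H1.
  assert (Hjj : 0 < INR j ^ j) by (apply pow_lt; lra).
  rewrite exp_Ropp.
  apply Rmult_le_reg_r with (exp y); [apply exp_pos|].
  rewrite Rmult_assoc, Rinv_l by (apply Rgt_not_eq, exp_pos). rewrite Rmult_1_r.
  apply Rmult_le_reg_r with (/ INR j ^ j); [apply Rinv_0_lt_compat; lra|].
  replace (INR j ^ j * exp y * / INR j ^ j) with (exp y) by (field; lra). exact H1.
Qed.

Lemma p_even0 j : p (2*j) 0 <> 0.
Proof.
  induction j. simpl. lra.
  replace (2 * S j)%nat with (S (S (2*j))) by lia. rewrite p_rec. replace (2 * 0 * p (S (2 * j)) 0) with 0 by ring. rewrite Rminus_0_r.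
  apply Rmult_integral_contrapositive. split; [|exact IHj].
  apply Rmult_integral_contrapositive. split; [lra|]. apply not_0_INR. lia.
Qed.

Lemma c_pos n k : 0 < c n k.
Proof.
  unfold c. apply Rmult_lt_0_compat; apply Rdiv_lt_0_compat; try apply INR_fact_lt_0;
  try apply Rmult_lt_0_compat; try apply INR_fact_lt_0; lra.
Qed.

Lemma erf_bound x : 0 < x -> Rabs (erf x) <= 2 / sqrt PI * x.
Proof.
  intros Hx. unfold erf. assert (0 < 2 / sqrt PI) by (apply Rdiv_lt_0_compat; [lra|apply sqrt_lt_R0, PI_RGT_0]).
  rewrite Rabs_mult, Rabs_pos_eq by lra. apply Rmult_le_compat_l; [lra|].
  eapply Rle_trans. apply (abs_RInt_le_const _ 0 x 1). lra.
  apply ex_RInt_cont. intros; auto_derive; auto.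
  intros t _. rewrite Rabs_pos_eq by (apply Rlt_le, exp_pos). apply exp_neg_le1. lra.
Qed.

Definition Rest n x := sum_f_R0 (fun k => c n k * x^(k+1) * ((-1)^k * p k x * exp (- x^2))) n.
Definition Poly n x := sum_f_R0 (fun k => c n k * p k 0 * x^(k+1)) n.

Lemma Q_split n x : Q n x = Poly n x + Rest n x.
Proof. unfold Q, Poly, Rest. rewrite <- plus_sum. apply sum_eq. intros; ring. Qed.

Lemma rest_bound n : exists K, forall x, 1 <= x -> Rabs (Rest n x) <= K.
Proof.
  exists (sum_f_R0 (fun k => c n k * 7^k * INR (fact k) * INR (S n) ^ (S n)) n).
  intros x Hx. unfold Rest. eapply Rle_trans; [apply sum_f_R0_triangle|]. apply sum_Rle.
  intros k Hk. pose proof (c_pos n k) as Hc.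
  assert (He : 0 < exp (- x^2)) by apply exp_pos.
  assert (Hp := p_bound2 x x k ltac:(lra)).
  rewrite !Rabs_mult, (Rabs_pos_eq (c n k)) by lra. rewrite (Rabs_pos_eq (exp _)) by lra.
  rewrite <- RPow_abs, pow_1_abs, Rabs_pos_eq by lra. rewrite Rmult_1_l.
  assert (H1 : x^(k+1) * (4*x+3)^k <= 7^k * x^(2*n+2)).
  { apply Rle_trans with (x^(k+1) * (7^k * x^k)).
    - apply Rmult_le_compat_l; [apply pow_le; lra|]. rewrite <- Rpow_mult_distr. apply pow_incr; lra.
    - replace (x^(k+1) * (7^k * x^k)) with (7^k * x^(k+1+k)) by (rewrite pow_add; ring).
      apply Rmult_le_compat_l; [apply pow_le; lra|]. apply Rle_pow; [lra|lia]. }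
  assert (H2 : x^(2*n+2) * exp (- x^2) <= INR (S n) ^ (S n)).
  { replace (2*n+2)%nat with (2 * S n)%nat by lia. rewrite pow_mult. apply pow_exp_bound; [nra|lia]. }
  assert (H3 : 0 <= INR (fact k)) by apply pos_INR.
  assert (H4 : 0 <= x^(k+1)) by (apply pow_le; lra).
  apply Rle_trans with (c n k * x^(k+1) * ((4*x+3)^k * INR (fact k)) * exp (- x^2)).
  rewrite <- Rmult_assoc.   { apply Rmult_le_compat_r; [lra|]. apply Rmult_le_compat_l; [nra|exact Hp]. }
  apply Rle_trans with (c n k * INR (fact k) * (7^k * (x^(2*n+2) * exp (- x^2)))).
  { replace (c n k * x ^ (k + 1) * ((4 * x + 3) ^ k * INR (fact k)) * exp (- x ^ 2)) with
      (c n k * INR (fact k) * (x ^ (k + 1) * (4 * x + 3) ^ k) * exp (- x ^ 2)) by ring.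
    replace (c n k * INR (fact k) * (7 ^ k * (x ^ (2 * n + 2) * exp (- x ^ 2)))) with
      (c n k * INR (fact k) * (7 ^ k * x ^ (2 * n + 2)) * exp (- x ^ 2)) by ring.
    apply Rmult_le_compat_r; [lra|]. apply Rmult_le_compat_l; [nra|exact H1]. }
  replace (c n k * 7 ^ k * INR (fact k) * INR (S n) ^ S n) with (c n k * INR (fact k) * (7^k * INR (S n) ^ S n)) by ring.
  apply Rmult_le_compat_l; [nra|]. apply Rmult_le_compat_l; [apply pow_le; lra|exact H2].
Qed.

Lemma c0_ge1 : 1 <= 2 / sqrt PI.
Proof.
  assert (Hs : sqrt PI <= 2).
  { rewrite <- (sqrt_square 2) by lra. apply sqrt_le_1_alt. pose proof PI_4. lra. }
  assert (0 < sqrt PI) by (apply sqrt_lt_R0, PI_RGT_0).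
  apply Rmult_le_reg_r with (sqrt PI); [lra|]. unfold Rdiv. rewrite Rmult_assoc, Rinv_l by lra. lra.
Qed.

Lemma not_uniform :
  ~ (forall e : R, 0 < e ->
       exists N : nat, forall n : nat, (N <= n)%nat ->
         forall x : R, 0 < x -> Rabs (f_n n x - erf x) < e).
Proof.
  intros H. destruct (H 1 ltac:(lra)) as [N HN].
  set (n' := (2*N+1)%nat). set (n := S n').
  assert (Hn : (N <= n)%nat) by (unfold n, n'; lia).
  destruct (rest_bound n) as [K HK].
  set (bn := c n n * p n 0).
  assert (Hbn : bn <> 0).
  { unfold bn. apply Rmult_integral_contrapositive. split. apply Rgt_not_eq, c_pos.
    replace n with (2 * (N+1))%nat by (unfold n, n'; lia). apply p_even0. }
  set (B := sum_f_R0 (fun k => Rabs (c n k * p k 0)) n').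
  assert (HB : 0 <= B).
  { unfold B. apply cond_pos_sum. intros; apply Rabs_pos. }
  assert (HK0 : 0 <= K) by (eapply Rle_trans; [apply Rabs_pos|apply (HK 1); lra]).
  assert (Key : forall x, 1 <= x -> Rabs bn * x <= 2 + K + B).
  { intros x Hx.
    assert (Hxn : 0 < x^n') by (apply pow_lt; lra).
    assert (H1 : 1 <= x^n') by (apply pow_R1_Rle; lra).
    assert (H1' : x <= x^n) by (unfold n; simpl; nra).
    assert (Hxn' : 1 <= x^n) by lra.
    specialize (HN n Hn x ltac:(lra)).
    pose proof (erf_bound x ltac:(lra)) as He. pose proof c0_ge1 as Hc0.
    assert (HQ : Rabs (Q n x) <= 1 + x).
    { unfold f_n in HN. fold (Q n x) in HN.
      assert (Rabs (2 / sqrt PI * Q n x) <= 1 + 2 / sqrt PI * x).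
      { pose proof (Rabs_triang (2 / sqrt PI * Q n x - erf x) (erf x)).
        replace (2 / sqrt PI * Q n x - erf x + erf x) with (2 / sqrt PI * Q n x) in H0 by ring. lra. }
      rewrite Rabs_mult, Rabs_pos_eq in H0 by lra.
      destruct (Rle_dec (Rabs (Q n x)) (1 + x)) as [Hd|Hd]; [exact Hd|].
      exfalso. apply Hd. pose proof (Rabs_pos (Q n x)). nra. }
    assert (HP : Rabs (Poly n x) <= 1 + x + K).
    { pose proof (Q_split n x). pose proof (HK x Hx).
      replace (Poly n x) with (Q n x - Rest n x) by lra.
      pose proof (Rabs_triang (Q n x) (- Rest n x)). rewrite Rabs_Ropp in H3. unfold Rminus. lra. }
    assert (HL : Rabs (sum_f_R0 (fun k => c n k * p k 0 * x^(k+1)) n') <= B * x^n).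
    { eapply Rle_trans; [apply sum_f_R0_triangle|]. unfold B. rewrite Rmult_comm, scal_sum. apply sum_Rle.
      intros k Hk. rewrite Rabs_mult, (Rabs_pos_eq (x^(k+1))) by (apply pow_le; lra).
      apply Rmult_le_compat_l; [apply Rabs_pos|]. apply Rle_pow; [lra|unfold n; lia]. }
    assert (HPe : Poly n x = sum_f_R0 (fun k => c n k * p k 0 * x^(k+1)) n' + bn * x^(n+1)).
    { unfold Poly, n. simpl sum_f_R0 at 1. fold n. unfold bn. reflexivity. }
    assert (Hlow : Rabs bn * x^(n+1) <= Rabs (Poly n x) + B * x^n).
    { rewrite HPe. assert (Eb : Rabs (bn * x^(n+1)) = Rabs bn * x^(n+1)) by (rewrite Rabs_mult, (Rabs_pos_eq (x^(n+1))) by (apply pow_le; lra); reflexivity).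
      rewrite <- Eb.
      pose proof (Rabs_triang (sum_f_R0 (fun k => c n k * p k 0 * x^(k+1)) n' + bn * x^(n+1))
          (- sum_f_R0 (fun k => c n k * p k 0 * x^(k+1)) n')).
      rewrite Rabs_Ropp in H0.
      replace (sum_f_R0 (fun k => c n k * p k 0 * x ^ (k + 1)) n' + bn * x ^ (n + 1) +
        - sum_f_R0 (fun k => c n k * p k 0 * x ^ (k + 1)) n') with (bn * x^(n+1)) in H0 by ring.
      lra. }
    replace (x^(n+1)) with (x * x^n) in Hlow by (rewrite Nat.add_1_r; reflexivity).
    assert (Hfin : Rabs bn * x * x^n <= (2 + K + B) * x^n).
    { assert (1 + x + K <= (2 + K) * x^n) by nra. nra. }
    apply Rmult_le_reg_r with (x^n); [lra|exact Hfin]. }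
  assert (Hb : 0 < Rabs bn) by (apply Rabs_pos_lt, Hbn).
  specialize (Key ((3 + K + B) / Rabs bn + 1)).
  assert (1 <= (3 + K + B) / Rabs bn + 1).
  { assert (0 <= (3 + K + B) / Rabs bn) by (apply Rdiv_le_0_compat; lra). lra. }
  specialize (Key H0).
  replace (Rabs bn * ((3 + K + B) / Rabs bn + 1)) with (3 + K + B + Rabs bn) in Key by (field; lra).
  lra.
Qed.


Theorem theorem2p2 :
  (forall x : R, 0 < x ->
     is_lim_seq (fun n => Derive (eps_n n) x) 0 /\
     is_lim_seq (fun n => eps_n n x) 0 /\
     is_lim_seq (fun n => f_n n x) (erf x)) /\
  ~ (forall e : R, 0 < e ->
       exists N : nat, forall n : nat, (N <= n)%nat ->
         forall x : R, 0 < x -> Rabs (f_n n x - erf x) < e).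
Proof.
  split.
  - intros x Hx. split; [apply deriv_lim; exact Hx|]. split; [apply eps_lim; exact Hx|].
    pose proof (is_lim_seq_minus' _ _ (erf x) 0 (is_lim_seq_const (erf x)) (eps_lim x Hx)) as H.
    replace (erf x - 0) with (erf x) in H by ring.
    eapply is_lim_seq_ext; [|exact H]. intros n. simpl. unfold eps_n. ring.
  - exact not_uniform.
Qed.
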